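(* Let $S$ be a complete star-omega semiring, let $\Sigma$ be an alphabet, and let $\mathcal P=(n,\Gamma,I,M,P,p_0,l)$ be an $S\langle\Sigma\cup\{\epsilon\}\rangle$-$\omega$-pushdown automaton over $(S\langle\langle\Sigma^*\rangle\rangle,S\langle\langle\Sigma^\omega\rangle\rangle)$. Put $x_0=I(M^* )_{p_0,\epsilon}P$, $x_p=(M^* )_{p,\epsilon}$, $z_0=I(M^{\omega,l})_{p_0}$, $z_p=(M^{\omega,l})_p$ ($p\in\Gamma$). Then these satisfy the mixed algebraic system $$x_0=I x_{p_0}P,\qquad x_p=\sum_{\pi=p_1\dots p_k\in\Gamma^*}M_{p,\pi}\,x_{p_1}\cdots x_{p_k}\ (p\in\Gamma),$$ $$z_0=I z_{p_0},\qquad z_p=\sum_{\pi=p_1\dots p_k\in\Gamma^+}M_{p,\pi}\sum_{1\le j\le k}x_{p_1}\cdots x_{p_{j-1}}z_{p_j}\ (p\in\Gamma),$$ where the empty product $x_{p_1}\cdots x_{p_k}$ for $k=0$ is the $n\times n$ identity matrix.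
   Context: A complete semiring-semimodule pair $(S,V)$ (in the sense of Ésik and Kuich, ''Modern Automata Theory'') consists of a complete starsemiring $S$ (arbitrary sums with infinite associativity/commutativity/distributivity laws, star $s^*=\sum_{j\ge0}s^j$) and a complete $S$-semimodule $V$, with infinite products $\prod_{j\ge1}s_j\in V$ of sequences in $S$ satisfying the axioms of that framework. $S$ is a complete star-omega semiring if $(S,S)$ is a complete semiring-semimodule pair; then $(S\langle\langle\Sigma^*\rangle\rangle,S\langle\langle\Sigma^\omega\rangle\rangle)$ (formal power series over finite, resp. infinite, words) is a complete semiring-semimodule pair. $S\langle\Sigma\cup\{\epsilon\}\rangle$ denotes the series with support contained in $\Sigma\cup\{\epsilon\}$. A pushdown transition matrix $M\in (S'^{n\times n})^{\Gamma^*\times\Gamma^*}$ (here $S'=S\langle\Sigma\cup\{\epsilon\}\rangle$; a $\Gamma^*\times\Gamma^*$ matrix with $n\times n$ blocks over $S'$) satisfies (i) for each $p\in\Gamma$ only finitely many blocks $M_{p,\pi}$ are nonzero, and (ii) $M_{\pi_1,\pi_2}=M_{p,\pi}$ if $\pi_1=p\pi'$, $\pi_2=\pi\pi'$ for some $p\in\Gamma$, $\pi,\pi'\in\Gamma^*$, and $0$ otherwise. An $S'$-$\omega$-pushdown automaton $(n,\Gamma,I,M,P,p_0,l)$ consists of $n\ge1$ (states $1,\dots,n$), an alphabet $\Gamma$, such a matrix $M$, $I\in S'^{1\times n}$, $P\in S'^{n\times1}$, $p_0\in\Gamma$ and $l\in\{0,\dots,n\}$. $M^*=\sum_{m\ge0}M^m$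 with blocks $(M^* )_{\pi,\pi'}$; with $P_l=\{(j_1,j_2,\dots)\in\{1,\dots,n\}^\omega\mid j_t\le l\text{ for infinitely many }t\}$, $M^{\omega,l}\in ((S\langle\langle\Sigma^\omega\rangle\rangle)^n)^{\Gamma^*}$ is given by $((M^{\omega,l})_\pi)_i=\sum_{\pi_1,\pi_2,\ldots\in\Gamma^*}\sum_{(j_1,j_2,\ldots)\in P_l}(M_{\pi,\pi_1})_{i,j_1}(M_{\pi_1,\pi_2})_{j_1,j_2}\cdots$. *)

(* Defs.v *)
From mathcomp Require Import all_boot.
Set Implicit Arguments. Unset Strict Implicit. Unset Printing Implicit Defensive.

(* Complete star-omega semiring: a complete semiring S (arbitrary sums indexed *)
(* by arbitrary types) such that (S,S) is a complete semiring-semimodule pair   *)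
(* (infinite products of sequences, Esik-Kuich axioms).                       *)
Record csos := CSOS {
  car :> Type;
  sadd : car -> car -> car;
  smul : car -> car -> car;
  szero : car;
  sone : car;
  csum : forall I : Type, (I -> car) -> car;
  iprod : (nat -> car) -> car;
  saddA : forall a b c, sadd a (sadd b c) = sadd (sadd a b) c;
  saddC : forall a b, sadd a b = sadd b a;
  sadd0 : forall a, sadd szero a = a;
  smulA : forall a b c, smul a (smul b c) = smul (smul a b) c;
  smul1l : forall a, smul sone a = a;
  smul1r : forall a, smul a sone = a;
  smulDl : forall a b c, smul (sadd a b) c = sadd (smul a c) (smul b c);
  smulDr : forall a b c, smul a (sadd b c) = sadd (smul a b) (smul a c);
  smul0l : forall a, smul szero a = szero;
  smul0r : forall a, smul a szero = szero;
  csum_empty : forall (I : Type) (f : I -> car), (I -> False) -> csum f = szero;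
  csum_unit : forall f : unit -> car, csum f = f tt;
  csum_bool : forall f : bool -> car, csum f = sadd (f true) (f false);
  csum_bij : forall (I J : Type) (e : J -> I) (f : I -> car),
      bijective e -> csum (fun j => f (e j)) = csum f;
  csum_sigma : forall (J : Type) (I : J -> Type) (f : {j : J & I j} -> car),
      csum f = csum (fun j => csum (fun i : I j => f (existT _ j i)));
  csum_mull : forall (I : Type) (f : I -> car) c,
      smul c (csum f) = csum (fun i => smul c (f i));
  csum_mulr : forall (I : Type) (f : I -> car) c,
      smul (csum f) c = csum (fun i => smul (f i) c);
  iprod_shift : forall s : nat -> car,
      iprod s = smul (s 0) (iprod (fun j => s j.+1));
  iprod_group : forall (s : nat -> car) (b : nat -> nat),
      b 0 = 0 -> (forall j, b j < b j.+1) ->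
      iprod s = iprod (fun j =>
        foldr (fun k acc => smul (s k) acc) sone (iota (b j) (b j.+1 - b j)));
  iprod_csum : forall (I : nat -> Type) (f : forall j, I j -> car),
      iprod (fun j => csum (f j)) =
      csum (fun g : (forall j, I j) => iprod (fun j => f j (g j)))
}.

Section Series.
Variable S : csos.
Variable Sigma : finType.

Definition ser := seq Sigma -> S.
Definition oser := (nat -> Sigma) -> S.

Definition ser0 : ser := fun _ => szero S.
Definition ser1 : ser := fun w => if w == [::] then sone S else szero S.
Definition seradd (r r' : ser) : ser := fun w => sadd (r w) (r' w).
Definition sermul (r r' : ser) : ser := fun w =>
  csum (fun p : {p : seq Sigma * seq Sigma | p.1 ++ p.2 = w} =>
          smul (r (sval p).1) (r' (sval p).2)).
Definition sersum (I : Type) (f : I -> ser) : ser := fun w => csum (fun i => f i w).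
Definition osersum (I : Type) (f : I -> oser) : oser := fun w => csum (fun i => f i w).
Definition seract (r : ser) (s : oser) : oser := fun w =>
  csum (fun k : nat => smul (r (mkseq w k)) (s (fun i => w (k + i)))).
(* u_0 u_1 u_2 ... = w  (factorization of an infinite word into finite words) *)
Definition factorizes (u : nat -> seq Sigma) (w : nat -> Sigma) : Prop :=
  (forall m, flatten (mkseq u m) = mkseq w (size (flatten (mkseq u m)))) /\
  (forall k, exists m, k <= size (flatten (mkseq u m))).
Definition seriprod (r : nat -> ser) : oser := fun w =>
  csum (fun u : {u : nat -> seq Sigma | factorizes u w} =>
          iprod (fun j => r j (sval u j))).

Definition in_Seps (r : ser) : Prop := forall w, 1 < size w -> r w = szero S.

Variable n : nat.
Definition mat := 'I_n -> 'I_n -> ser.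
Definition ovec := 'I_n -> oser.
Definition mat0 : mat := fun _ _ => ser0.
Definition mat1 : mat := fun i j => if i == j then ser1 else ser0.
Definition matmul (A B : mat) : mat := fun i j =>
  sersum (fun k : 'I_n => sermul (A i k) (B k j)).
Definition matsum (I : Type) (f : I -> mat) : mat := fun i j => sersum (fun k => f k i j).
Definition mprod (l : seq mat) : mat := foldr matmul mat1 l.
Definition matvec (A : mat) (v : ovec) : ovec := fun i =>
  osersum (fun k : 'I_n => seract (A i k) (v k)).
Definition ovecsum (I : Type) (f : I -> ovec) : ovec := fun i => osersum (fun k => f k i).
Definition rowmat (I : 'I_n -> ser) (A : mat) : 'I_n -> ser := fun j =>
  sersum (fun i : 'I_n => sermul (I i) (A i j)).
Definition rowcol (I P : 'I_n -> ser) : ser := sersum (fun i : 'I_n => sermul (I i) (P i)).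
Definition rowovec (I : 'I_n -> ser) (v : ovec) : oser :=
  osersum (fun i : 'I_n => seract (I i) (v i)).

Variable Gamma : finType.
Definition pmat := seq Gamma -> seq Gamma -> mat.
Definition pmat1 : pmat := fun pi pi' => if pi == pi' then mat1 else mat0.
Definition pmatmul (A B : pmat) : pmat := fun pi pi' i j =>
  sersum (fun q : seq Gamma * 'I_n => sermul (A pi q.1 i q.2) (B q.1 pi' q.2 j)).
Definition pmatpow (M : pmat) (m : nat) : pmat := iter m (pmatmul M) pmat1.
Definition pstar (M : pmat) : pmat := fun pi pi' i j =>
  sersum (fun m : nat => pmatpow M m pi pi' i j).

Definition is_pdtm (M : pmat) : Prop :=
  (forall pi1 pi2 i j, in_Seps (M pi1 pi2 i j)) /\
  (forall p : Gamma, exists s : seq (seq Gamma),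
      forall pi, pi \notin s -> M [:: p] pi = mat0) /\
  (forall pi1 pi2,
      (forall (p : Gamma) (pi pi' : seq Gamma),
          pi1 = p :: pi' -> pi2 = pi ++ pi' -> M pi1 pi2 = M [:: p] pi) /\
      ((~ exists (p : Gamma) (pi pi' : seq Gamma), pi1 = p :: pi' /\ pi2 = pi ++ pi') ->
          M pi1 pi2 = mat0)).

(* M^{omega,l}; states are 0,...,n-1, so "j <= l" (1-based) becomes "j < l" *)
Definition in_Pl (l : nat) (js : nat -> 'I_n) : Prop :=
  forall N, exists t, N <= t /\ js t < l.
Definition pomega (M : pmat) (l : nat) (pi : seq Gamma) : ovec := fun i =>
  osersum (fun q : {q : (nat -> seq Gamma) * (nat -> 'I_n) | in_Pl l q.2} =>
    let pis t := if t is t'.+1 then (sval q).1 t' else pi in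
    let js t := if t is t'.+1 then (sval q).2 t' else i in
    seriprod (fun t => M (pis t) (pis t.+1) (js t) (js t.+1))).

End Series.

(* Main.v *)
Require Import Defs.
From mathcomp Require Import all_boot.
From Stdlib Require Import ClassicalEpsilon ProofIrrelevance FunctionalExtensionality PropExtensionality Classical.
Set Implicit Arguments. Unset Strict Implicit. Unset Printing Implicit Defensive.

Lemma sig_eq (A : Type) (P : A -> Prop) (x y : {a | P a}) : sval x = sval y -> x = y.
Proof. case: x => a p; case: y => b q /= E; subst b; f_equal; apply: proof_irrelevance. Qed.

Lemma sigT_sig_eq (A B : Type) (Q : A -> B -> Prop) (x y : {a : A & {b : B | Q a b}}) :
  projT1 x = projT1 y -> sval (projT2 x) = sval (projT2 y) -> x = y.
Proof.
case: x => a [b p]; case: y => a' [b' p'] /= E1 E2; subst a' b'.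
by rewrite (proof_irrelevance _ p p').
Qed.

Section Scalar.
Variable S : csos.
Implicit Types (I J : Type).

Lemma saddr0 (a : S) : sadd a (szero S) = a.
Proof. by rewrite saddC sadd0. Qed.

Lemma csum0 I (f : I -> S) : (forall i, f i = szero S) -> csum f = szero S.
Proof.
move=> H; have -> : f = fun i => smul (szero S) (szero S).
  by apply: functional_extensionality => i; rewrite H smul0l.
by rewrite -csum_mull smul0l.
Qed.

Lemma csum_ext I (f g : I -> S) : (forall i, f i = g i) -> csum f = csum g.
Proof. by move=> H; rewrite (functional_extensionality f g H). Qed.

Lemma csum_reidx I J (e : J -> I) (g : I -> J) (f : I -> S) :
  cancel e g -> cancel g e -> csum (fun j => f (e j)) = csum f.
Proof. by move=> c1 c2; apply: csum_bij; exists g. Qed.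

Lemma csum_sigT J (I : J -> Type) (f : forall j, I j -> S) :
  csum (fun j => csum (fun i : I j => f j i)) = csum (fun x : {j & I j} => f (projT1 x) (projT2 x)).
Proof. by rewrite (csum_sigma (fun x : {j & I j} => f (projT1 x) (projT2 x))). Qed.

Lemma csum_pair I J (f : I -> J -> S) :
  csum (fun i => csum (fun j => f i j)) = csum (fun x : I * J => f x.1 x.2).
Proof.
rewrite csum_sigT.
pose e := fun x : I * J => existT (fun _ => J) x.1 x.2.
pose g := fun x : {i : I & J} => (projT1 x, projT2 x).
rewrite -(@csum_reidx _ _ e g); first by [].
- by case.
- by case.
Qed.

Lemma csum_swap I J (f : I -> J -> S) :
  csum (fun i => csum (fun j => f i j)) = csum (fun j => csum (fun i => f i j)).
Proof.
rewrite !csum_pair.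
rewrite -(@csum_reidx _ _ (fun x : J * I => (x.2, x.1)) (fun x : I * J => (x.2, x.1))) //.
- by case.
- by case.
Qed.

Lemma csum_sub I (P : I -> Prop) (f : I -> S) : (forall i, ~ P i -> f i = szero S) ->
  csum f = csum (fun x : {i | P i} => f (sval x)).
Proof.
move=> H.
pose T := fun b : bool => if b then {i | P i} else {i | ~ P i}.
pose e := fun x : {b : bool & T b} =>
  match x with existT b y => (if b as b0 return T b0 -> I then fun y => sval y else fun y => sval y) y end.
pose g := fun i => match excluded_middle_informative (P i) with
  | left p => existT T true (exist _ i p) | right np => existT T false (exist _ i np) end.
rewrite -(@csum_reidx _ _ e g f).
- rewrite (csum_sigma (fun x => f (e x))) csum_bool /=.
  rewrite [X in sadd _ X]csum0 ?saddr0 //.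
  by case=> i /= np; apply: H.
- case=> [[]] [i p] /=; rewrite /g; case: excluded_middle_informative => q //=.
  + by rewrite (proof_irrelevance _ p q).
  + by rewrite (proof_irrelevance _ p q).
- by move=> i; rewrite /g; case: excluded_middle_informative.
Qed.

Lemma csum_inj I J (e : J -> I) (f : I -> S) : injective e ->
  (forall i, (forall j, e j <> i) -> f i = szero S) -> csum f = csum (fun j => f (e j)).
Proof.
move=> ie H.
rewrite (@csum_sub _ (fun i => exists j, e j = i)); last first.
  by move=> i Hn; apply: H => j E; apply: Hn; exists j.
pose h := fun j => exist (fun i => exists j, e j = i) (e j) (ex_intro _ j erefl).
pose g := fun x : {i | exists j, e j = i} => proj1_sig (constructive_indefinite_description _ (proj2_sig x)).
rewrite -(@csum_reidx _ _ h g); first by [].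
- move=> j; rewrite /g /=; case: constructive_indefinite_description => j' /=; exact: ie.
- move=> x; apply: sig_eq; rewrite /g /=; by case: constructive_indefinite_description.
Qed.

Lemma csum_one I (i0 : I) (f : I -> S) : (forall i, i <> i0 -> f i = szero S) -> csum f = f i0.
Proof.
move=> H; rewrite (@csum_inj _ _ (fun _ : unit => i0)) ?csum_unit //.
- by case; case.
- by move=> i Hi; apply: H => E; apply: (Hi tt).
Qed.

Lemma csum_part I O (P : O -> I -> Prop) (f : I -> S) : (forall i, exists! o, P o i) ->
  csum f = csum (fun o => csum (fun x : {i | P o i} => f (sval x))).
Proof.
move=> H; rewrite csum_sigT.
pose e := fun x : {o : O & {i | P o i}} => sval (projT2 x).
pose g := fun i => let c := constructive_indefinite_description _ (H i) in
  existT (fun o => {i | P o i}) (proj1_sig c) (exist _ i (proj1 (proj2_sig c))).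
rewrite -(@csum_reidx _ _ e g) //.
- case=> o [i p]; rewrite /g /e /=; destruct (constructive_indefinite_description _ (H i)) as [o' [p' U]] => /=.
  have E := U o p; subst o; congr existT; exact: sig_eq.
Qed.

Lemma csum_add I (f g : I -> S) : sadd (csum f) (csum g) = csum (fun i => sadd (f i) (g i)).
Proof.
have E : (fun i => sadd (f i) (g i)) = (fun i => csum (fun b : bool => if b then f i else g i)).
  by apply: functional_extensionality => i; rewrite csum_bool.
by rewrite E csum_swap csum_bool.
Qed.

Lemma csum_sum I J (f : I + J -> S) : csum f = sadd (csum (fun i => f (inl i))) (csum (fun j => f (inr j))).
Proof.
pose T := fun b : bool => if b then I else J.
pose e := fun x : {b : bool & T b} =>
  match x with existT b y => (if b as b0 return T b0 -> I + J then fun y => inl y else fun y => inr y) y end.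
pose g := fun x : I + J => match x with inl i => existT T true i | inr j => existT T false j end.
rewrite -(@csum_reidx _ _ e g f).
- by rewrite (csum_sigma (fun x => f (e x))) csum_bool.
- by case=> [[]] y.
- by case.
Qed.

Lemma csum_nat (f : nat -> S) : csum f = sadd (f 0) (csum (fun m => f m.+1)).
Proof.
pose e := fun x : unit + nat => match x with inl _ => 0 | inr m => m.+1 end.
pose g := fun m : nat => match m with 0 => inl tt | m'.+1 => inr m' end.
rewrite -(@csum_reidx _ _ e g f).
- by rewrite csum_sum csum_unit.
- by case=> [[]|].
- by case.
Qed.

Lemma csum_ord k (f : 'I_k.+1 -> S) : csum f = sadd (f ord0) (csum (fun j : 'I_k => f (lift ord0 j))).
Proof.
pose e := fun x : unit + 'I_k => match x with inl _ => ord0 | inr j => lift ord0 j end.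
pose g := fun j : 'I_k.+1 => match unlift ord0 j with None => inl tt | Some j' => inr j' end.
rewrite -(@csum_reidx _ _ e g f).
- by rewrite csum_sum csum_unit.
- by case=> [[]|j]; rewrite /g /e ?unlift_none ?liftK.
- move=> j; rewrite /g /e; case: unliftP => // ->. 
Qed.

Lemma csum_empty' I (f : I -> S) : (I -> False) -> csum f = szero S.
Proof. exact: csum_empty. Qed.

Lemma csum_false I (P : I -> Prop) (f : I -> S) : (forall i, ~ P i) -> csum (fun x : {i | P i} => f (sval x)) = szero S.
Proof. by move=> H; apply: csum_empty => -[i p]; apply: (H i). Qed.

Lemma csum_true I (P : I -> Prop) (f : I -> S) : (forall i, P i) -> csum (fun x : {i | P i} => f (sval x)) = csum f.
Proof. by move=> H; rewrite (@csum_sub _ P f) // => i; move: (H i). Qed.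

End Scalar.

Lemma csum_reidx' (S : csos) I J (e : J -> I) (g : I -> J) (f : I -> S) (F : J -> S) :
  cancel e g -> cancel g e -> (forall j, F j = f (e j)) -> csum F = csum f.
Proof.
move=> c1 c2 H; rewrite -(csum_reidx f c1 c2); apply: csum_ext => j; exact: H.
Qed.

Lemma mkseq_add T (w : nat -> T) k1 k2 :
  mkseq w (k1 + k2) = mkseq w k1 ++ mkseq (fun i => w (k1 + i)) k2.
Proof. rewrite /mkseq iotaD map_cat add0n; congr (_ ++ _); by rewrite -[k1 in iota k1]addn0 iotaDl -map_comp. Qed.

Lemma cat_inj_r T (a b c : seq T) : a ++ c = b ++ c -> a = b.
Proof.
move=> E; have Hs : size a = size b by move/(congr1 size): E; rewrite !size_cat => /eqP; rewrite eqn_add2r => /eqP.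
by rewrite -(take_size_cat c (erefl (size a))) E take_size_cat.
Qed.

Section Series.
Variable S : csos.
Variable Sigma : finType.
Local Notation ser := (ser S Sigma).
Local Notation oser := (oser S Sigma).
Local Notation s0 := (szero S).
Definition oser0 : oser := fun _ => s0.
Definition sh (w : nat -> Sigma) k : nat -> Sigma := fun i => w (k + i).

Lemma fext A B (f g : A -> B) : (forall x, f x = g x) -> f = g.
Proof. exact: functional_extensionality. Qed.

Lemma sermul_suml I (f : I -> ser) (r : ser) :
  sermul (sersum f) r = sersum (fun i => sermul (f i) r).
Proof.
apply: fext => w; rewrite /sermul /sersum.
under csum_ext => p do rewrite csum_mulr.
by rewrite csum_swap.
Qed.

Lemma sermul_sumr I (f : I -> ser) (r : ser) :
  sermul r (sersum f) = sersum (fun i => sermul r (f i)).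
Proof.
apply: fext => w; rewrite /sermul /sersum.
under csum_ext => p do rewrite csum_mull.
by rewrite csum_swap.
Qed.

Lemma sermul0l (r : ser) : sermul (@ser0 S Sigma) r = @ser0 S Sigma.
Proof. apply: fext => w; apply: csum0 => p; exact: smul0l. Qed.

Lemma sermul0r (r : ser) : sermul r (@ser0 S Sigma) = @ser0 S Sigma.
Proof. apply: fext => w; apply: csum0 => p; exact: smul0r. Qed.

Lemma sermul1l (r : ser) : sermul (@ser1 S Sigma) r = r.
Proof.
apply: fext => w; rewrite /sermul.
rewrite (@csum_one _ _ (exist (fun p : seq Sigma * seq Sigma => p.1 ++ p.2 = w) ([::], w) erefl)).
  by rewrite /= /ser1 eqxx smul1l.
case=> [[u v]] /= E Hne; rewrite /ser1; case: eqP => [Eu|_]; last exact: smul0l.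
by exfalso; apply: Hne; apply: sig_eq => /=; rewrite -E Eu.
Qed.

Lemma sermul1r (r : ser) : sermul r (@ser1 S Sigma) = r.
Proof.
apply: fext => w; rewrite /sermul.
rewrite (@csum_one _ _ (exist (fun p : seq Sigma * seq Sigma => p.1 ++ p.2 = w) (w, [::]) (cats0 w))).
  by rewrite /= /ser1 eqxx smul1r.
case=> [[u v]] /= E Hne; rewrite /ser1; case: eqP => [Ev|_]; last exact: smul0r.
by exfalso; apply: Hne; apply: sig_eq => /=; rewrite -E Ev cats0.
Qed.

Lemma sermulA (a b c : ser) : sermul (sermul a b) c = sermul a (sermul b c).
Proof.
apply: fext => w; rewrite /sermul.
under csum_ext => p do rewrite csum_mulr.
under [RHS]csum_ext => p do rewrite csum_mull.
rewrite !csum_sigT.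
pose X := {p : {p : seq Sigma * seq Sigma | p.1 ++ p.2 = w} & {p' : seq Sigma * seq Sigma | p'.1 ++ p'.2 = (sval p).1}}.
pose Y := {p : {p : seq Sigma * seq Sigma | p.1 ++ p.2 = w} & {p' : seq Sigma * seq Sigma | p'.1 ++ p'.2 = (sval p).2}}.
have eP : forall y : Y, ((sval (projT1 y)).1 ++ (sval (projT2 y)).1) ++ (sval (projT2 y)).2 = w.
  by case=> [[[u v]] /= E] [[v1 v2]] /= E'; rewrite -catA E' E.
pose e := fun y : Y => existT (fun p : {p : seq Sigma * seq Sigma | p.1 ++ p.2 = w} => {p' : seq Sigma * seq Sigma | p'.1 ++ p'.2 = (sval p).1})
   (exist _ ((sval (projT1 y)).1 ++ (sval (projT2 y)).1, (sval (projT2 y)).2) (eP y))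
   (exist _ ((sval (projT1 y)).1, (sval (projT2 y)).1) erefl).
have gP : forall x : X, (sval (projT2 x)).1 ++ ((sval (projT2 x)).2 ++ (sval (projT1 x)).2) = w.
  by case=> [[[u v]] /= E] [[v1 v2]] /= E'; rewrite catA E' E.
pose g := fun x : X => existT (fun p : {p : seq Sigma * seq Sigma | p.1 ++ p.2 = w} => {p' : seq Sigma * seq Sigma | p'.1 ++ p'.2 = (sval p).2})
   (exist _ ((sval (projT2 x)).1, (sval (projT2 x)).2 ++ (sval (projT1 x)).2) (gP x))
   (exist _ ((sval (projT2 x)).2, (sval (projT1 x)).2) erefl).
symmetry; apply: (csum_reidx' (e := e) (g := g)).
- case=> [[[u v]] /= E] [[v1 v2]] /= E'; apply: sigT_sig_eq => //=; apply: sig_eq => /=.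
  by rewrite E'.
- case=> [[[u v]] /= E] [[v1 v2]] /= E'; apply: sigT_sig_eq => //=; apply: sig_eq => /=.
  by rewrite E'.
- by case=> [[[u v]] /= E] [[v1 v2]] /= E'; rewrite smulA.
Qed.

Lemma seract_suml I (f : I -> ser) (s : oser) :
  seract (sersum f) s = osersum (fun i => seract (f i) s).
Proof.
apply: fext => w; rewrite /seract /osersum /sersum.
under csum_ext => k do rewrite csum_mulr.
by rewrite csum_swap.
Qed.

Lemma seract_sumr I (f : I -> oser) (r : ser) :
  seract r (osersum f) = osersum (fun i => seract r (f i)).
Proof.
apply: fext => w; rewrite /seract /osersum.
under csum_ext => k do rewrite csum_mull.
by rewrite csum_swap.
Qed.

Lemma seract0l (s : oser) : seract (@ser0 S Sigma) s = oser0.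
Proof. apply: fext => w; apply: csum0 => k; exact: smul0l. Qed.

Lemma seract0r (r : ser) : seract r oser0 = oser0.
Proof. apply: fext => w; apply: csum0 => k; exact: smul0r. Qed.

Lemma seract1 (s : oser) : seract (@ser1 S Sigma) s = s.
Proof.
apply: fext => w; rewrite /seract (@csum_one _ _ 0).
  rewrite /ser1 /= smul1l; congr s; apply: fext => i; by rewrite add0n.
move=> k Hk; rewrite /ser1; case: eqP => [E|_]; last exact: smul0l.
by move/(congr1 size): E; rewrite size_mkseq => /eqP; case: (k) Hk.
Qed.

Lemma seractA (a b : ser) (s : oser) : seract (sermul a b) s = seract a (seract b s).
Proof.
apply: fext => w; rewrite /seract /sermul.
under csum_ext => k do rewrite csum_mulr.
under [RHS]csum_ext => k do rewrite csum_mull.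
rewrite !csum_sigT.
pose X := {k : nat & {p : seq Sigma * seq Sigma | p.1 ++ p.2 = mkseq w k}}.
pose e := fun y : {k1 : nat & nat} => existT (fun k : nat => {p : seq Sigma * seq Sigma | p.1 ++ p.2 = mkseq w k})
   (projT1 y + projT2 y)
   (exist _ (mkseq w (projT1 y), mkseq (fun i => w (projT1 y + i)) (projT2 y)) (esym (mkseq_add w _ _))).
pose g := fun x : X => existT (fun _ : nat => nat) (size (sval (projT2 x)).1) (size (sval (projT2 x)).2).
symmetry; apply: (csum_reidx' (e := e) (g := g)).
- case=> k1 k2; by rewrite /g /e /= !size_mkseq.
- case=> k [[u v]] /= E; apply: sigT_sig_eq => /=.
    by rewrite -size_cat E size_mkseq.
  have Eu : mkseq w (size u) = u.
    have Ht : take (size u) (mkseq w k) = u by rewrite -E take_size_cat.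
    apply: (etrans _ Ht); rewrite /mkseq -map_take; congr map.
    have H : size u <= k by rewrite -(size_mkseq w k) -E size_cat leq_addr.
    by rewrite -(subnKC H) iotaD take_size_cat ?size_iota.
  have Ev : mkseq (fun i => w (size u + i)) (size v) = v.
    have Ht : drop (size u) (mkseq w k) = v by rewrite -E drop_size_cat.
    have Hk : k = size u + size v by rewrite -size_cat E size_mkseq.
    by apply: (etrans _ Ht); rewrite Hk mkseq_add drop_size_cat // size_mkseq.
  by rewrite Eu Ev.
- case=> k1 k2 /=; rewrite smulA; congr smul; congr (_ _); apply: fext => i; by rewrite addnA.
Qed.

End Series.

Lemma mkseqSl T (f : nat -> T) m : mkseq f m.+1 = f 0 :: mkseq (fun i => f i.+1) m.
Proof. by rewrite -add1n mkseq_add /=. Qed.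

Lemma iprod0 (S : csos) t (s : nat -> S) : s t = szero S -> iprod s = szero S.
Proof.
elim: t s => [|t IH] s H; rewrite iprod_shift.
  by rewrite H smul0l.
by rewrite (IH (fun j => s j.+1)) ?smul0r.
Qed.

Section Iprod.
Variable S : csos.
Variable Sigma : finType.
Local Notation ser := (ser S Sigma).
Local Notation oser := (oser S Sigma).

Definition ucons (x : seq Sigma) (u : nat -> seq Sigma) : nat -> seq Sigma :=
  fun j => if j is j'.+1 then u j' else x.

Lemma flat_ucons (x : seq Sigma) u m : flatten (mkseq (ucons x u) m.+1) = x ++ flatten (mkseq u m).
Proof. by rewrite mkseqSl. Qed.

Lemma fact_head (u : nat -> seq Sigma) (w : nat -> Sigma) : factorizes u w -> mkseq w (size (u 0)) = u 0.
Proof. by case=> H _; have := H 1; rewrite /= cats0 => <-. Qed.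

Lemma fact_cons k (u : nat -> seq Sigma) (w : nat -> Sigma) : factorizes u (sh w k) -> factorizes (ucons (mkseq w k) u) w.
Proof.
case=> H1 H2; split.
  case=> [|m] //; rewrite flat_ucons size_cat size_mkseq mkseq_add -H1 //.
move=> K; have [m Hm] := H2 K; exists m.+1; rewrite flat_ucons size_cat.
exact: (leq_trans Hm (leq_addl _ _)).
Qed.

Lemma fact_tail (u : nat -> seq Sigma) (w : nat -> Sigma) : factorizes u w -> factorizes (fun j => u j.+1) (sh w (size (u 0))).
Proof.
move=> F; have Eh := fact_head F; case: F => H1 H2; split.
  move=> m; have := H1 m.+1; rewrite mkseqSl size_cat mkseq_add Eh => E.
  by have := congr1 (drop (size (u 0))) E; rewrite !drop_size_cat.
move=> K; have [[|m] Hm] := H2 (size (u 0) + K).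
  by exists 0; move: Hm; rewrite /= leqn0 addn_eq0 => /andP [_ /eqP ->].
by exists m; move: Hm; rewrite mkseqSl /= size_cat leq_add2l.
Qed.

Lemma seriprod_shift (r : nat -> ser) :
  seriprod r = seract (r 0) (seriprod (fun t => r t.+1)).
Proof.
apply: fext => w; rewrite /seriprod /seract.
under [RHS]csum_ext => k do rewrite csum_mull.
rewrite csum_sigT.
pose e := fun x : {k : nat & {u | factorizes u (sh w k)}} =>
  exist (fun u => factorizes u w) (ucons (mkseq w (projT1 x)) (sval (projT2 x))) (fact_cons (proj2_sig (projT2 x))).
pose g := fun u : {u | factorizes u w} =>
  existT (fun k => {u | factorizes u (sh w k)}) (size (sval u 0)) (exist _ (fun j => sval u j.+1) (fact_tail (proj2_sig u))).
symmetry; apply: (csum_reidx' (e := e) (g := g)).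
- case=> k [u F]; apply: sigT_sig_eq => /=; first by rewrite size_mkseq.
  by [].
- case=> u F; apply: sig_eq => /=; apply: fext => -[|j] //=.
  exact: fact_head.
- case=> k [u F] /=; by rewrite [RHS]iprod_shift.
Qed.

Lemma seriprod0 (r : nat -> ser) t : r t = @ser0 S Sigma -> seriprod r = @oser0 S Sigma.
Proof.
move=> H; apply: fext => w; apply: csum0 => u; apply: (iprod0 (t := t)); by rewrite H.
Qed.

End Iprod.

Section Mat.
Variable S : csos.
Variable Sigma : finType.
Variable n : nat.
Local Notation ser := (ser S Sigma).
Local Notation oser := (oser S Sigma).
Local Notation mat := (mat S Sigma n).
Local Notation ovec := (ovec S Sigma n).
Local Notation Z := (@ser0 S Sigma).
Local Notation OZ := (@oser0 S Sigma).
Definition ovec0 : ovec := fun _ => OZ.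

Lemma sersum_ext I (f g : I -> ser) : (forall i, f i = g i) -> sersum f = sersum g.
Proof. by move=> H; rewrite (fext H). Qed.
Lemma osersum_ext I (f g : I -> oser) : (forall i, f i = g i) -> osersum f = osersum g.
Proof. by move=> H; rewrite (fext H). Qed.

Lemma sersum_swap I J (f : I -> J -> ser) :
  sersum (fun i => sersum (fun j => f i j)) = sersum (fun j => sersum (fun i => f i j)).
Proof. apply: fext => w; exact: csum_swap. Qed.
Lemma osersum_swap I J (f : I -> J -> oser) :
  osersum (fun i => osersum (fun j => f i j)) = osersum (fun j => osersum (fun i => f i j)).
Proof. apply: fext => w; exact: csum_swap. Qed.

Lemma sersum_one I (i0 : I) (f : I -> ser) : (forall i, i <> i0 -> f i = Z) -> sersum f = f i0.
Proof. move=> H; apply: fext => w; rewrite /sersum (csum_one (i0 := i0)) // => i /H ->; by []. Qed.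
Lemma osersum_one I (i0 : I) (f : I -> oser) : (forall i, i <> i0 -> f i = OZ) -> osersum f = f i0.
Proof. move=> H; apply: fext => w; rewrite /osersum (csum_one (i0 := i0)) // => i /H ->; by []. Qed.

Lemma sersum0 I (f : I -> ser) : (forall i, f i = Z) -> sersum f = Z.
Proof. move=> H; apply: fext => w; apply: csum0 => i; by rewrite H. Qed.
Lemma osersum0 I (f : I -> oser) : (forall i, f i = OZ) -> osersum f = OZ.
Proof. move=> H; apply: fext => w; apply: csum0 => i; by rewrite H. Qed.

Lemma matE (A B : mat) : (forall i j, A i j = B i j) -> A = B.
Proof. move=> H; apply: fext => i; apply: fext => j; exact: H. Qed.
Lemma ovecE (u v : ovec) : (forall i, u i = v i) -> u = v.
Proof. move=> H; apply: fext => i; exact: H. Qed.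

Lemma matmul_suml I (f : I -> mat) (B : mat) :
  matmul (matsum f) B = matsum (fun x => matmul (f x) B).
Proof.
apply: matE => i j; rewrite /matmul /matsum.
under sersum_ext => k do rewrite sermul_suml.
by rewrite sersum_swap.
Qed.

Lemma matmul_sumr I (f : I -> mat) (A : mat) :
  matmul A (matsum f) = matsum (fun x => matmul A (f x)).
Proof.
apply: matE => i j; rewrite /matmul /matsum.
under sersum_ext => k do rewrite sermul_sumr.
by rewrite sersum_swap.
Qed.

Lemma matmulA (A B C : mat) : matmul (matmul A B) C = matmul A (matmul B C).
Proof.
apply: matE => i j; rewrite /matmul.
under sersum_ext => k do rewrite sermul_suml.
under [RHS]sersum_ext => k do rewrite sermul_sumr.
rewrite sersum_swap; apply: sersum_ext => k; apply: sersum_ext => k'; exact: sermulA.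
Qed.

Lemma matmul1l (A : mat) : matmul (@mat1 S Sigma n) A = A.
Proof.
apply: matE => i j; rewrite /matmul (sersum_one (i0 := i)).
  by rewrite /mat1 eqxx sermul1l.
by move=> k /eqP Hk; rewrite /mat1 eq_sym (negbTE Hk) sermul0l.
Qed.

Lemma matmul1r (A : mat) : matmul A (@mat1 S Sigma n) = A.
Proof.
apply: matE => i j; rewrite /matmul (sersum_one (i0 := j)).
  by rewrite /mat1 eqxx sermul1r.
by move=> k /eqP Hk; rewrite /mat1 (negbTE Hk) sermul0r.
Qed.

Lemma matmul0l (A : mat) : matmul (@mat0 S Sigma n) A = @mat0 S Sigma n.
Proof. apply: matE => i j; apply: sersum0 => k; exact: sermul0l. Qed.
Lemma matmul0r (A : mat) : matmul A (@mat0 S Sigma n) = @mat0 S Sigma n.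
Proof. apply: matE => i j; apply: sersum0 => k; exact: sermul0r. Qed.

Lemma matvec_suml I (f : I -> mat) (v : ovec) :
  matvec (matsum f) v = ovecsum (fun x => matvec (f x) v).
Proof.
apply: ovecE => i; rewrite /matvec /matsum /ovecsum.
under osersum_ext => k do rewrite seract_suml.
by rewrite osersum_swap.
Qed.

Lemma matvec_sumr I (f : I -> ovec) (A : mat) :
  matvec A (ovecsum f) = ovecsum (fun x => matvec A (f x)).
Proof.
apply: ovecE => i; rewrite /matvec /ovecsum.
under osersum_ext => k do rewrite seract_sumr.
by rewrite osersum_swap.
Qed.

Lemma matvecA (A B : mat) (v : ovec) : matvec (matmul A B) v = matvec A (matvec B v).
Proof.
apply: ovecE => i; rewrite /matvec /matmul.
under osersum_ext => k do rewrite seract_suml.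
under [RHS]osersum_ext => k do rewrite seract_sumr.
rewrite osersum_swap; apply: osersum_ext => k; apply: osersum_ext => k'; exact: seractA.
Qed.

Lemma matvec1 (v : ovec) : matvec (@mat1 S Sigma n) v = v.
Proof.
apply: ovecE => i; rewrite /matvec (osersum_one (i0 := i)).
  by rewrite /mat1 eqxx seract1.
by move=> k /eqP Hk; rewrite /mat1 eq_sym (negbTE Hk) seract0l.
Qed.

Lemma matvec0l (v : ovec) : matvec (@mat0 S Sigma n) v = ovec0.
Proof. apply: ovecE => i; apply: osersum0 => k; exact: seract0l. Qed.
Lemma matvec0r (A : mat) : matvec A ovec0 = ovec0.
Proof. apply: ovecE => i; apply: osersum0 => k; exact: seract0r. Qed.

End Mat.

Section MatSum.
Variable S : csos.
Variable Sigma : finType.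
Variable n : nat.
Local Notation mat := (mat S Sigma n).
Local Notation ovec := (ovec S Sigma n).
Local Notation MZ := (@mat0 S Sigma n).
Local Notation VZ := (@ovec0 S Sigma n).

Lemma matsum_ext I (f g : I -> mat) : (forall i, f i = g i) -> matsum f = matsum g.
Proof. by move=> H; rewrite (fext H). Qed.
Lemma ovecsum_ext I (f g : I -> ovec) : (forall i, f i = g i) -> ovecsum f = ovecsum g.
Proof. by move=> H; rewrite (fext H). Qed.

Lemma matsum_swap I J (f : I -> J -> mat) :
  matsum (fun i => matsum (fun j => f i j)) = matsum (fun j => matsum (fun i => f i j)).
Proof. apply: matE => i j; apply: fext => w; exact: csum_swap. Qed.
Lemma ovecsum_swap I J (f : I -> J -> ovec) :
  ovecsum (fun i => ovecsum (fun j => f i j)) = ovecsum (fun j => ovecsum (fun i => f i j)).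
Proof. apply: ovecE => i; apply: fext => w; exact: csum_swap. Qed.

Lemma matsum0 I (f : I -> mat) : (forall i, f i = MZ) -> matsum f = MZ.
Proof. move=> H; apply: matE => i j; apply: fext => w; apply: csum0 => k; by rewrite H. Qed.
Lemma ovecsum0 I (f : I -> ovec) : (forall i, f i = VZ) -> ovecsum f = VZ.
Proof. move=> H; apply: ovecE => i; apply: fext => w; apply: csum0 => k; by rewrite H. Qed.

Lemma matsum_one I (i0 : I) (f : I -> mat) : (forall i, i <> i0 -> f i = MZ) -> matsum f = f i0.
Proof. move=> H; apply: matE => i j; apply: fext => w; rewrite /matsum /sersum (csum_one (i0 := i0)) // => k /H ->; by []. Qed.
Lemma ovecsum_one I (i0 : I) (f : I -> ovec) : (forall i, i <> i0 -> f i = VZ) -> ovecsum f = f i0.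
Proof. move=> H; apply: ovecE => i; apply: fext => w; rewrite /ovecsum /osersum (csum_one (i0 := i0)) // => k /H ->; by []. Qed.

Lemma matsum_nat0 (f : nat -> mat) : f 0 = MZ -> matsum f = matsum (fun m => f m.+1).
Proof. move=> H; apply: matE => i j; apply: fext => w; by rewrite /matsum /sersum csum_nat H sadd0. Qed.

Lemma matsum_inj I J (e : J -> I) (f : I -> mat) : injective e ->
  (forall i, (forall j, e j <> i) -> f i = MZ) -> matsum f = matsum (fun j => f (e j)).
Proof.
move=> ie H; apply: matE => i j; apply: fext => w; rewrite /matsum /sersum (csum_inj (e := e)) //.
by move=> x Hx; rewrite H.
Qed.
Lemma ovecsum_inj I J (e : J -> I) (f : I -> ovec) : injective e ->
  (forall i, (forall j, e j <> i) -> f i = VZ) -> ovecsum f = ovecsum (fun j => f (e j)).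
Proof.
move=> ie H; apply: ovecE => i; apply: fext => w; rewrite /ovecsum /osersum (csum_inj (e := e)) //.
by move=> x Hx; rewrite H.
Qed.

End MatSum.

Section PD.
Variable S : csos.
Variable Sigma : finType.
Variable n : nat.
Variable Gamma : finType.
Variable M : pmat S Sigma n Gamma.
Hypothesis HM : is_pdtm M.
Local Notation mat := (mat S Sigma n).
Local Notation ovec := (ovec S Sigma n).
Local Notation MZ := (@mat0 S Sigma n).
Local Notation VZ := (@ovec0 S Sigma n).
Local Notation pow := (pmatpow M).

Lemma M_nil g : M [::] g = MZ.
Proof. case: HM => _ [_ H]; apply: (H [::] g).2; by case=> p [pi [pi' []]]. Qed.

Lemma M_cat a rho d : M (a :: rho) (d ++ rho) = M [:: a] d.
Proof. case: HM => _ [_ H]; exact: ((H (a :: rho) (d ++ rho)).1 a d rho erefl erefl). Qed.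

Lemma M_notcat a rho g : (forall d, d ++ rho <> g) -> M (a :: rho) g = MZ.
Proof.
case: HM => _ [_ H] Hd; apply: (H (a :: rho) g).2; case=> p [pi [pi' [[_ E1] E2]]].
by apply: (Hd pi); rewrite E2 E1.
Qed.

Lemma pmatmul_sum (A B : pmat S Sigma n Gamma) pi pi' :
  pmatmul A B pi pi' = matsum (fun g => matmul (A pi g) (B g pi')).
Proof.
apply: matE => i j; apply: fext => w; rewrite /pmatmul /matsum /matmul /sersum.
by rewrite -(csum_pair (fun g k => sermul (A pi g i k) (B g pi' k j) w)).
Qed.

Lemma powS m pi pi' : pow m.+1 pi pi' = matsum (fun g => matmul (M pi g) (pow m g pi')).
Proof. exact: pmatmul_sum. Qed.

Lemma reidx_mat a rho (F : seq Gamma -> mat) :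
  matsum (fun g => matmul (M (a :: rho) g) (F g)) = matsum (fun d => matmul (M [:: a] d) (F (d ++ rho))).
Proof.
rewrite (matsum_inj (e := fun d => d ++ rho)).
- by apply: matsum_ext => d; rewrite M_cat.
- move=> d1 d2; exact: cat_inj_r.
- by move=> g Hg; rewrite M_notcat // matmul0l.
Qed.

Lemma reidx_vec a rho (F : seq Gamma -> ovec) :
  ovecsum (fun g => matvec (M (a :: rho) g) (F g)) = ovecsum (fun d => matvec (M [:: a] d) (F (d ++ rho))).
Proof.
rewrite (ovecsum_inj (e := fun d => d ++ rho)).
- by apply: ovecsum_ext => d; rewrite M_cat.
- move=> d1 d2; exact: cat_inj_r.
- by move=> g Hg; rewrite M_notcat // matvec0l.
Qed.

Lemma pow_nil m : pow m [::] [::] = if m == 0 then @mat1 S Sigma n else MZ.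
Proof.
case: m => [|m]; first by rewrite /= /pmat1 ?eqxx.
rewrite powS; apply: matsum0 => g; by rewrite M_nil matmul0l.
Qed.

Lemma pow0_cons a al : pow 0 (a :: al) [::] = MZ.
Proof. by []. Qed.

Lemma pow_split_nil m be : pow m ([::] ++ be) [::] =
  matsum (fun m1 : nat => if m1 <= m then matmul (pow m1 [::] [::]) (pow (m - m1) be [::]) else MZ).
Proof.
rewrite (matsum_one (i0 := 0)) /=.
  by rewrite /pmat1 eqxx matmul1l subn0.
by case=> [|m1] // _; rewrite pow_nil /=; case: ifP => _ //; rewrite matmul0l.
Qed.

Lemma pow_split m al be : pow m (al ++ be) [::] =
  matsum (fun m1 : nat => if m1 <= m then matmul (pow m1 al [::]) (pow (m - m1) be [::]) else MZ).
Proof.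
elim: m al be => [|m IH] [|a al] be; try exact: pow_split_nil.
  rewrite pow0_cons; symmetry; apply: matsum0 => -[|m1] //=; by rewrite matmul0l.
rewrite cat_cons powS reidx_mat.
under matsum_ext => d do rewrite catA IH matmul_sumr.
rewrite matsum_swap [RHS]matsum_nat0; last by rewrite pow0_cons matmul0l.
apply: matsum_ext => m1; rewrite ltnS subSS; case: ifP => _.
  rewrite (@matsum_ext _ _ _ _ _ (fun d => matmul (matmul (M [:: a] d) (pow m1 (d ++ al) [::])) (pow (m - m1) be [::]))); last by move=> d; rewrite matmulA.
  by rewrite -(matmul_suml (fun d => matmul (M [:: a] d) (pow m1 (d ++ al) [::]))) powS (reidx_mat a al).
by apply: matsum0 => d; rewrite matmul0r.
Qed.

Lemma pstarE pi pi' : pstar M pi pi' = matsum (fun m => pow m pi pi').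
Proof. by []. Qed.

Lemma pstar_cat al be : pstar M (al ++ be) [::] = matmul (pstar M al [::]) (pstar M be [::]).
Proof.
rewrite !pstarE.
under matsum_ext => m do rewrite pow_split.
rewrite matsum_swap matmul_suml; apply: matsum_ext => m1.
rewrite matmul_sumr (matsum_inj (e := fun m2 => m1 + m2)).
- by apply: matsum_ext => m2; rewrite leq_addr addKn.
- move=> x y; exact: addnI.
- move=> m Hm; case: ifP => // H; exfalso; apply: (Hm (m - m1)); exact: subnKC.
Qed.

Lemma pstar_nil : pstar M [::] [::] = @mat1 S Sigma n.
Proof.
rewrite pstarE (matsum_one (i0 := 0)) ?pow_nil //.
by case=> [|m] // _; rewrite pow_nil.
Qed.

Lemma pstar_prod pi : pstar M pi [::] = mprod (map (fun p => pstar M [:: p] [::]) pi).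
Proof.
elim: pi => [|a pi IH]; first exact: pstar_nil.
by rewrite -cat1s pstar_cat IH.
Qed.

Lemma x_eq p : pstar M [:: p] [::] =
  matsum (fun ps : seq Gamma => matmul (M [:: p] ps) (mprod (map (fun p => pstar M [:: p] [::]) ps))).
Proof.
rewrite pstarE matsum_nat0 //.
under matsum_ext => m do rewrite powS.
rewrite matsum_swap; apply: matsum_ext => g.
by rewrite -matmul_sumr -pstarE pstar_prod.
Qed.

End PD.

Section Omega.
Variable S : csos.
Variable Sigma : finType.
Variable n : nat.
Variable Gamma : finType.
Variable M : pmat S Sigma n Gamma.
Hypothesis HM : is_pdtm M.
Variable l : nat.
Local Notation mat := (mat S Sigma n).
Local Notation ovec := (ovec S Sigma n).
Local Notation oser := (oser S Sigma).
Local Notation MZ := (@mat0 S Sigma n).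
Local Notation VZ := (@ovec0 S Sigma n).
Local Notation OZ := (@oser0 S Sigma).
Local Notation pow := (pmatpow M).

Definition Q := {q : (nat -> seq Gamma) * (nat -> 'I_n) | in_Pl l q.2}.
Definition pis (pi : seq Gamma) (q : Q) t := if t is t'.+1 then (sval q).1 t' else pi.
Definition jss (i : 'I_n) (q : Q) t := if t is t'.+1 then (sval q).2 t' else i.
Definition wt pi i (q : Q) : oser :=
  seriprod (fun t => M (pis pi q t) (pis pi q t.+1) (jss i q t) (jss i q t.+1)).
Lemma pomegaE pi i : pomega M l pi i = osersum (fun q : Q => wt pi i q).
Proof. by []. Qed.
Definition ZP (P : (nat -> seq Gamma) -> Prop) pi i : oser :=
  osersum (fun x : {q : Q | P (pis pi q)} => wt pi i (sval x)).

Definition ZV P pi : ovec := fun i => ZP P pi i.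

Definition scons T (x : T) (s : nat -> T) : nat -> T := fun t => if t is t'.+1 then s t' else x.

Lemma in_Pl_cons (k : 'I_n) (js : nat -> 'I_n) : in_Pl l js -> in_Pl l (scons k js).
Proof. move=> H N; have [t [Ht Hl]] := H N; exists t.+1; split => //; exact: leqW. Qed.
Lemma in_Pl_tail (js : nat -> 'I_n) : in_Pl l js -> in_Pl l (fun t => js t.+1).
Proof.
move=> H N; have [[|t] [Ht Hl]] := H N.+1 => //; exists t; split => //.
Qed.

Definition consQ g k (q : Q) : Q :=
  exist _ (scons g (sval q).1, scons k (sval q).2) (in_Pl_cons k (proj2_sig q)).
Definition tailQ (q : Q) : Q :=
  exist _ ((fun t => (sval q).1 t.+1), (fun t => (sval q).2 t.+1)) (in_Pl_tail (proj2_sig q)).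

Lemma pis_cons pi g k q : pis pi (consQ g k q) = scons pi (pis g q).
Proof. by apply: fext => -[|[|t]]. Qed.
Lemma pis_tail pi q : scons pi (pis ((sval q).1 0) (tailQ q)) = pis pi q.
Proof. by apply: fext => -[|[|t]]. Qed.

Lemma one_step P pi : ZV P pi =
  ovecsum (fun g => matvec (M pi g) (ZV (fun s => P (scons pi s)) g)).
Proof.
apply: ovecE => i; rewrite /ovecsum /matvec /ZV /ZP.
under [RHS]osersum_ext => g do under osersum_ext => k do rewrite seract_sumr.
apply: fext => w; rewrite /osersum.
rewrite (csum_pair (fun g k => csum (fun x => seract (M pi g i k) (wt g k (sval x)) w))) csum_sigT.
pose Y := {gk : seq Gamma * 'I_n & {q : Q | P (scons pi (pis gk.1 q))}}.
have eP : forall y : Y, P (pis pi (consQ (projT1 y).1 (projT1 y).2 (sval (projT2 y)))).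
  by case=> gk [q p]; rewrite pis_cons.
pose e := fun y : Y => exist (fun q : Q => P (pis pi q)) (consQ (projT1 y).1 (projT1 y).2 (sval (projT2 y))) (eP y).
have gP : forall x : {q : Q | P (pis pi q)}, P (scons pi (pis ((sval (sval x)).1 0) (tailQ (sval x)))).
  by case=> q p; rewrite pis_tail.
pose g := fun x : {q : Q | P (pis pi q)} =>
  existT (fun gk : seq Gamma * 'I_n => {q : Q | P (scons pi (pis gk.1 q))}) ((sval (sval x)).1 0, (sval (sval x)).2 0) (exist _ (tailQ (sval x)) (gP x)).
symmetry; apply: (csum_reidx' (e := e) (g := g)).
- case=> [[g0 k]] [[[qa qb] pq] p]; apply: sigT_sig_eq => //=; apply: sig_eq => //=.
- case=> [[[qa qb] pq] p]; apply: sig_eq; apply: sig_eq => /=.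
  by congr pair; apply: fext => -[|t].
- case=> [[g0 k]] [q p] /=; by rewrite /wt [in RHS]seriprod_shift.
Qed.

Lemma ZP_true pi i : ZP (fun _ => True) pi i = pomega M l pi i.
Proof. apply: fext => w; exact: (csum_true (P := fun _ : Q => True)). Qed.

Lemma pomega_step pi : pomega M l pi = ovecsum (fun g => matvec (M pi g) (pomega M l g)).
Proof.
have := one_step (fun _ => True) pi.
have E : forall pi, ZV (fun _ => True) pi = pomega M l pi.
  by move=> pi'; apply: ovecE => i; rewrite /ZV ZP_true.
rewrite E => ->; apply: ovecsum_ext => g; by rewrite E.
Qed.

Lemma pomega_nil : pomega M l [::] = VZ.
Proof. rewrite pomega_step; apply: ovecsum0 => g; by rewrite M_nil // matvec0l. Qed.


Definition hit (be : seq Gamma) m (s : nat -> seq Gamma) := s m = be /\ forall t, t < m -> s t <> be.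
Definition never (be : seq Gamma) (s : nat -> seq Gamma) := forall t, s t <> be.
Definition vstep (s1 s2 : seq Gamma) := exists (p : Gamma) (pi pi' : seq Gamma), s1 = p :: pi' /\ s2 = pi ++ pi'.
Definition valid (s : nat -> seq Gamma) := forall t, vstep (s t) (s t.+1).

Lemma wt_invalid pi i q : ~ valid (pis pi q) -> wt pi i q = OZ.
Proof.
move=> H; have [t Ht] := not_all_ex_not _ _ H.
apply: (seriprod0 (t := t)); case: HM => _ [_ H2].
by rewrite ((H2 (pis pi q t) (pis pi q t.+1)).2 Ht).
Qed.

Lemma ZP_false P pi i : (forall q : Q, ~ P (pis pi q)) -> ZP P pi i = OZ.
Proof. move=> H; apply: fext => w; apply: csum_empty => -[q p]; exact: (H q). Qed.

Lemma cons_cat_neq (a : Gamma) al be : (a :: al) ++ be <> be.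
Proof. move/(congr1 size); rewrite size_cat /= => /eqP; by rewrite -{2}(add0n (size be)) eqn_add2r. Qed.

Lemma hit_lemma be m al : ZV (hit be m) (al ++ be) = matvec (pow m al [::]) (pomega M l be).
Proof.
elim: m al => [|m IH] [|a al].
- apply: ovecE => i; rewrite (pow_nil HM 0) /= matvec1.
  apply: fext => w; apply: (csum_true (P := fun q : Q => hit be 0 (pis be q)) (fun q => wt be i q w)).
  by move=> q; split.
- rewrite pow0_cons matvec0l; apply: ovecE => i; apply: ZP_false => q [H _].
  exact: (cons_cat_neq H).
- rewrite one_step (pow_nil HM) /= matvec0l; apply: ovecsum0 => g.
  have -> : ZV (fun s => hit be m.+1 (scons ([::] ++ be) s)) g = VZ.
    apply: ovecE => k; apply: ZP_false => q [_ H]; exact: (H 0).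
  exact: matvec0r.
- rewrite one_step.
  have -> : (fun s => hit be m.+1 (scons ((a :: al) ++ be) s)) = hit be m.
    apply: fext => s; apply: propositional_extensionality; split.
      by case=> H1 H2; split => // t Ht; exact: (H2 t.+1).
    case=> H1 H2; split => // -[|t] Ht /=; first exact: cons_cat_neq.
    exact: H2.
  rewrite cat_cons (reidx_vec HM).
  under ovecsum_ext => d do rewrite catA IH -matvecA.
  by rewrite -(matvec_suml (fun d => matmul (M [:: a] d) (pow m (d ++ al) [::]))) (powS M) (reidx_mat HM a al).
Qed.

Lemma vstep_cat x y be : vstep x y -> M (x ++ be) (y ++ be) = M x y.
Proof.
case=> p [pi [pi' [-> ->]]].
by rewrite cat_cons -catA !(M_cat HM).
Qed.

Lemma valid_ne s t : valid s -> s t <> [::].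
Proof. by move=> H; case: (H t) => p [pi [pi' [-> _]]]. Qed.

Lemma shape (al0 be : seq Gamma) (s : nat -> seq Gamma) : s 0 = al0 ++ be -> al0 <> [::] ->
  valid s -> never be s -> forall t, exists al, al <> [::] /\ s t = al ++ be.
Proof.
move=> H0 Hne Hv Hn; elim=> [|t [al [Hal Ht]]]; first by exists al0.
case: (Hv t) => p [pi [pi' [E1 E2]]].
case: al Hal Ht => [//|a al] _ Ht.
move: E1; rewrite Ht cat_cons => -[_ Epi'].
exists (pi ++ al); split; last by rewrite E2 -Epi' catA.
by move=> E; apply: (Hn t.+1); rewrite E2 -Epi' catA E.
Qed.

Definition appQ (be : seq Gamma) (q : Q) : Q :=
  exist _ ((fun t => (sval q).1 t ++ be), (sval q).2) (proj2_sig q).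
Definition stripQ (be : seq Gamma) (q : Q) : Q :=
  exist _ ((fun t => take (size ((sval q).1 t) - size be) ((sval q).1 t)), (sval q).2) (proj2_sig q).

Lemma pis_app be pi q t : pis (pi ++ be) (appQ be q) t = pis pi q t ++ be.
Proof. by case: t. Qed.

Lemma strip_cat (al be : seq Gamma) : take (size (al ++ be) - size be) (al ++ be) = al.
Proof. by rewrite size_cat addnK take_size_cat. Qed.

Lemma never_lemma be al : ZV (never be) (al ++ be) = pomega M l al.
Proof.
case: al => [|a al'].
  rewrite pomega_nil; apply: ovecE => i; apply: ZP_false => q H; exact: (H 0).
set al0 := a :: al'.
apply: ovecE => i; apply: fext => w; rewrite /ZV /ZP /osersum pomegaE /osersum.
rewrite [RHS](csum_sub (P := fun q : Q => valid (pis al0 q))); last first.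
  by move=> q Hq; rewrite wt_invalid.
have neverP : forall x : {q : Q | valid (pis al0 q)}, never be (pis (al0 ++ be) (appQ be (sval x))).
  case=> q Hq t; rewrite pis_app => E.
  apply: (@valid_ne _ t Hq); apply/eqP; rewrite -size_eq0.
  by move/(congr1 size): E; rewrite size_cat => /eqP; rewrite -{2}(add0n (size be)) eqn_add2r.
pose e := fun x : {q : Q | valid (pis al0 q)} =>
  exist (fun q : Q => never be (pis (al0 ++ be) q)) (appQ be (sval x)) (neverP x).
rewrite (csum_inj (e := e)).
- apply: csum_ext => -[q Hq] /=; congr (_ w); rewrite /wt; congr seriprod; apply: fext => t.
  by rewrite !(pis_app be al0) vstep_cat //; exact: Hq.
- case=> [[[f1 g1] p1]] v1 [[[f2 g2] p2]] v2 /= E.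
  have E' := congr1 (fun y => sval (sval y)) E; simpl in E'; case: E' => Ef Eg.
  apply: sig_eq; apply: sig_eq => /=; congr pair => //.
  apply: fext => t; apply: (@cat_inj_r _ _ _ be); exact: (congr1 (fun f => f t) Ef).
- case=> q Hnev Hnot; case: (classic (valid (pis (al0 ++ be) q))) => Hv; last by rewrite wt_invalid.
  exfalso.
  have Sh := shape (erefl _) (fun H : al0 = [::] => ltac:(discriminate)) Hv Hnev.
  have Es : forall t, pis al0 (stripQ be q) t ++ be = pis (al0 ++ be) q t.
    case=> [|t] //=; have [al [_ Ht]] := Sh t.+1; rewrite /= in Ht; by rewrite Ht strip_cat.
  have Hv' : valid (pis al0 (stripQ be q)).
    move=> t; have [al [Hal Ht]] := Sh t.
    have Et : pis al0 (stripQ be q) t = al by apply: (@cat_inj_r _ _ _ be); rewrite Es.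
    case: (Hv t) => p [pi [pi' [E1 E2]]].
    case: al Hal Ht Et => [//|a0 rho] _ Ht Et.
    move: E1; rewrite Ht cat_cons => -[Ep Epi'].
    exists a0, pi, rho; split => //.
    by apply: (@cat_inj_r _ _ _ be); rewrite Es E2 -Epi' catA.
  apply: (Hnot (exist _ (stripQ be q) Hv')); apply: sig_eq => /=.
  apply: sig_eq => /=; rewrite [RHS]surjective_pairing; congr pair.
  by apply: fext => t; exact: (Es t.+1).
Qed.

Lemma csum_opt (T : Type) (f : option T -> S) : csum f = sadd (f None) (csum (fun m => f (Some m))).
Proof.
pose e := fun x : unit + T => match x with inl _ => None | inr m => Some m end.
pose g := fun m : option T => match m with None => inl tt | Some m' => inr m' end.
rewrite -(@csum_reidx _ _ _ e g f).
- by rewrite csum_sum csum_unit.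
- by case=> [[]|].
- by case.
Qed.

Lemma decomp al be i w : pomega M l (al ++ be) i w =
  sadd (pomega M l al i w) (matvec (pstar M al [::]) (pomega M l be) i w).
Proof.
rewrite pomegaE /osersum.
rewrite (csum_part (O := option nat) (P := fun o (q : Q) => match o with
   | None => never be (pis (al ++ be) q) | Some m => hit be m (pis (al ++ be) q) end)); last first.
  move=> q; set s := pis (al ++ be) q.
  case: (classic (exists t, s t = be)) => [Hex|Hnex].
    have Hex' : exists t, s t == be by case: Hex => t Ht; exists t; apply/eqP.
    case: (ex_minnP Hex') => m /eqP Hm Hmin.
    exists (Some m); split.
      split => // t Ht Est; have := Hmin t (introT eqP Est); by rewrite leqNgt Ht.
    case=> [m'|] /=; last by move=> H; case: (H m).
    case=> Hm' Hlt; congr Some; apply/eqP; rewrite eqn_leq Hmin ?Hm' ?eqxx //=.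
    by rewrite leqNgt; apply/negP => H; apply: (Hlt m H).
  exists None; split; first by move=> t Ht; apply: Hnex; exists t.
  by case=> [m|] // [Hm _]; exfalso; apply: Hnex; exists m.
rewrite csum_opt; congr sadd.
  exact: (congr1 (fun f => f i w) (never_lemma be al)).
rewrite pstarE matvec_suml; apply: csum_ext => m.
exact: (congr1 (fun f => f i w) (hit_lemma be m al)).
Qed.

End Omega.

Section Final.
Variable S : csos.
Variable Sigma : finType.
Variable n : nat.
Variable Gamma : finType.
Variable M : pmat S Sigma n Gamma.
Hypothesis HM : is_pdtm M.
Variable l : nat.
Variable p0 : Gamma.
Local Notation VZ := (@ovec0 S Sigma n).

Lemma Zseq pi : pomega M l pi = ovecsum (fun j : 'I_(size pi) =>
  matvec (mprod (map (fun p => pstar M [:: p] [::]) (take j pi))) (pomega M l [:: nth p0 pi j])).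
Proof.
elim: pi => [|a pi IH].
  rewrite (pomega_nil HM); apply: ovecE => i; apply: fext => w; symmetry; apply: csum_empty; by case.
apply: ovecE => i; apply: fext => w.
rewrite -cat1s (decomp HM) /ovecsum /osersum csum_ord; congr sadd.
  by rewrite /= matvec1.
rewrite IH matvec_sumr /ovecsum /osersum; apply: csum_ext => j.
by rewrite lift0 /= matvecA.
Qed.

End Final.

Theorem corollary12 (S : csos) (Sigma : finType) (n : nat) (Gamma : finType)
    (I : 'I_n -> ser S Sigma) (M : pmat S Sigma n Gamma) (P : 'I_n -> ser S Sigma)
    (p0 : Gamma) (l : nat) :
  0 < n -> l <= n ->
  (forall i, in_Seps (I i)) -> (forall i, in_Seps (P i)) ->
  is_pdtm M ->
  let x0 := rowcol (rowmat I (pstar M [:: p0] [::])) P in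
  let x := fun p : Gamma => pstar M [:: p] [::] in
  let z0 := rowovec I (pomega M l [:: p0]) in
  let z := fun p : Gamma => pomega M l [:: p] in
  [/\ x0 = rowcol (rowmat I (x p0)) P,
      forall p : Gamma,
        x p = matsum (fun ps : seq Gamma => matmul (M [:: p] ps) (mprod (map x ps))),
      z0 = rowovec I (z p0)
    & forall p : Gamma,
        z p = ovecsum (fun ps : {ps : seq Gamma | ps <> [::]} =>
                matvec (M [:: p] (sval ps))
                  (ovecsum (fun j : 'I_(size (sval ps)) =>
                     matvec (mprod (map x (take j (sval ps))))
                            (z (nth p0 (sval ps) j)))))].
Proof.
move=> _ _ _ _ HM x0 x z0 z; split => //.
- move=> p; exact: (x_eq HM p).
- move=> p; rewrite /z (pomega_step M l).
  apply: ovecE => i; apply: fext => w; rewrite /ovecsum /osersum.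
  rewrite (csum_sub (P := fun ps : seq Gamma => ps <> [::])); last first.
    move=> g Hg; have -> : g = [::] by apply: NNPP.
    by rewrite (pomega_nil HM) matvec0r.
  apply: csum_ext => -[ps Hps] /=.
  by rewrite (Zseq HM l p0 ps).
Qed.
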